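(* Let $x,y\in\mathrm{Cay}$. Then $[x]\ge[y]$ if and only if $\gamma(x)\ge\gamma(y)$ (containment of permutations). Equivalently, the bijection $[x]\mapsto\gamma(x)$ from the set $[\mathrm{Cay}]$ of equivalence classes to $\mathcal{S}$ maps the set of classes avoiding $[y]$ (i.e. classes $[x]$ with $[x]\not\ge[y]$) onto $\mathcal{S}(\gamma(y))$, the set of permutations avoiding $\gamma(y)$.
   Context: A Cayley permutation of length $n$ is a word of positive integers in which every integer from $1$ to its maximum occurs; $\mathrm{Cay}$ is the set of all of them, $\mathcal{S}\subseteq\mathrm{Cay}$ the set of permutations. For Cayley permutations, $y\le x$ (containment) means there are indices $i_1<\dots<i_k$ ($k$ the length of $y$) with $x(i_s)<x(i_t)\iff y(s)<y(t)$ and $x(i_s)=x(i_t)\iff y(s)=y(t)$. For $x\in\mathrm{Cay}_n$, $\gamma(x)\in\mathcal{S}_n$ is obtained by sorting the pairs $(x(i),i)$ increasingly by first coordinate, ties by decreasing second coordinate, and reading off the second coordinates. Write $x\sim y$ iff $\gamma(x)=\gamma(y)$; $[y]$ is the class of $y$ and $[\mathrm{Cay}]$ the set of classes. For classes, $[x]\ge[y]$ means $x'\ge y'$ for some $x'\in[x]$, $y'\in[y]$. $\mathcal{S}(\tau)$ is the set of permutations avoiding $\tau$. *)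

(* Defs.v *)
(* Words are represented as seq nat (values are 1-based). *)
From mathcomp Require Import all_boot.
Set Implicit Arguments. Unset Strict Implicit. Unset Printing Implicit Defensive.

Definition wmax (x : seq nat) : nat := foldr maxn 0 x.

Definition is_cay (x : seq nat) : bool :=
  all (fun v => 0 < v) x && all (fun k => k \in x) (iota 1 (wmax x)).

Definition is_perm (x : seq nat) : bool := is_cay x && uniq x.

Definition order_iso (a b : seq nat) : bool :=
  (size a == size b) &&
  [forall s : 'I_(size a), forall t : 'I_(size a),
     ((nth 0 a s < nth 0 a t) == (nth 0 b s < nth 0 b t)) &&
     ((nth 0 a s == nth 0 a t) == (nth 0 b s == nth 0 b t))].

Definition contains (x y : seq nat) : Prop :=
  exists m : bitseq, size m = size x /\ order_iso (mask m x) y.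

Definition gamma_rel (p q : nat * nat) : bool :=
  (p.1 < q.1) || ((p.1 == q.1) && (q.2 <= p.2)).

Definition gamma (x : seq nat) : seq nat :=
  map snd (sort gamma_rel (zip x (iota 1 (size x)))).

Definition class_ge (x y : seq nat) : Prop :=
  exists x' y', is_cay x' /\ is_cay y' /\ gamma x' = gamma x /\
                gamma y' = gamma y /\ contains x' y'.

(* Main.v *)
Require Import Defs.
From mathcomp Require Import all_boot zify.
Set Implicit Arguments. Unset Strict Implicit. Unset Printing Implicit Defensive.

Definition Rw (w : seq nat) : rel nat := fun i j =>
  (nth 0 w i < nth 0 w j) || ((nth 0 w i == nth 0 w j) && (j <= i)).

Lemma Rw_tr w : transitive (Rw w).
Proof.
move=> j i k; rewrite /Rw.
case/orP=> [h1|/andP[/eqP h1 h2]]; case/orP=> [h3|/andP[/eqP h3 h4]].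
- by rewrite (ltn_trans h1 h3).
- by rewrite -h3 h1.
- by rewrite h1 h3.
- by rewrite h1 h3 eqxx (leq_trans h4 h2) orbT.
Qed.

Lemma Rw_anti w : antisymmetric (Rw w).
Proof.
move=> i j; rewrite /Rw; case/andP.
case/orP=> [h1|/andP[/eqP h1 h2]]; case/orP=> [h3|/andP[/eqP h3 h4]]; try lia.
Qed.

Lemma Rw_total w : total (Rw w).
Proof.
move=> i j; rewrite /Rw.
case: (ltngtP (nth 0 w i) (nth 0 w j)) => //= _.
by case: (leqP j i) => //= h; rewrite ltnW.
Qed.

Lemma sort_eq_in (r1 r2 : rel nat) s : total r1 -> total r2 -> transitive r2 ->
  antisymmetric r2 -> {in s &, r1 =2 r2} -> sort r1 s = sort r2 s.
Proof.
move=> t1 t2 tr2 an2 e.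
apply: (sorted_eq tr2 an2); last by rewrite perm_sort perm_sym perm_sort.
  rewrite -(@eq_in_sorted _ (mem s) r1 r2) //; first exact: sort_sorted.
  by apply/allP=> x; rewrite mem_sort.
exact: sort_sorted.
Qed.

Definition sig_ w := sort (Rw w) (iota 0 (size w)).
Lemma zipE w : zip w (iota 1 (size w)) = map (fun i => (nth 0 w i, i.+1)) (iota 0 (size w)).
Proof.
  apply: (@eq_from_nth _ (0,0)); first by rewrite size_zip size_map !size_iota minnn.
  move=> i; rewrite size_zip size_iota minnn => hi.
  by rewrite nth_zip ?size_iota // (nth_map 0) ?size_iota // !nth_iota.
Qed.
Lemma tot w : total (relpre (fun i => (nth 0 w i, i.+1)) gamma_rel).
Proof.
move=> a b; rewrite /= /gamma_rel /= !ltnS; exact: (Rw_total w a b).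
Qed.
Lemma agr w : {in iota 0 (size w) &,
   relpre (fun i : nat => (nth 0 w i, i.+1)) gamma_rel =2 Rw w}.
Proof. by move=> a b _ _; rewrite /= /gamma_rel /= ltnS. Qed.
Lemma gammaE w : gamma w = map succn (sig_ w).
Proof.
rewrite /gamma /sig_ zipE sort_map -map_comp.
rewrite (@sort_eq_in _ (Rw w) _ (tot w) (@Rw_total w) (@Rw_tr w) (@Rw_anti w) (@agr w)).
by apply: eq_map.
Qed.

Lemma nth_mono_lt (I : seq nat) i j : sorted ltn I -> i < size I -> j < size I ->
  (nth 0 I i < nth 0 I j) = (i < j).
Proof.
move=> sI hi hj.
have H := sorted_ltn_nth ltn_trans 0 sI.
case: (ltngtP i j) => h.
- exact: H.
- apply/negbTE; rewrite -leqNgt ltnW //; exact: H.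
- by rewrite h ltnn.
Qed.

Lemma nth_mono_eq (I : seq nat) i j : sorted ltn I -> i < size I -> j < size I ->
  (nth 0 I i == nth 0 I j) = (i == j).
Proof.
move=> sI hi hj; case: (ltngtP i j) => h.
- by apply/negbTE; rewrite neq_ltn nth_mono_lt ?h.
- by apply/negbTE; rewrite neq_ltn [_ < nth 0 I i]nth_mono_lt ?h ?orbT.
- by rewrite h eqxx.
Qed.

Lemma sort_sub w I : sorted ltn I ->
  sort (Rw w) I = map (nth 0 I) (sig_ (map (nth 0 w) I)).
Proof.
move=> sI.
rewrite -[X in sort _ X](mkseq_nth 0 I) /mkseq sort_map /sig_ size_map.
congr map; apply: sort_eq_in.
- move=> a b; exact: (Rw_total w (nth 0 I a) (nth 0 I b)).
- exact: (@Rw_total (map (nth 0 w) I)).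
- exact: (@Rw_tr (map (nth 0 w) I)).
- exact: (@Rw_anti (map (nth 0 w) I)).
- move=> a b; rewrite !mem_iota !add0n => /andP[_ ha] /andP[_ hb].
  rewrite /Rw !(nth_map 0) //.
  by rewrite /= [nth 0 I b <= _]leqNgt (@nth_mono_lt I) // -leqNgt.
Qed.

Lemma oiP a b : reflect (size a = size b /\ forall s t, s < size a -> t < size a ->
   ((nth 0 a s < nth 0 a t) = (nth 0 b s < nth 0 b t)) /\
   ((nth 0 a s == nth 0 a t) = (nth 0 b s == nth 0 b t))) (order_iso a b).
Proof.
apply: (iffP andP).
- case=> /eqP E /forallP H; split=> // s t hs ht.
  move: (H (Ordinal hs)) => /forallP H1.
  by move: (H1 (Ordinal ht)) => /andP[/eqP h1 /eqP h2].
- case=> E H; split; first by apply/eqP.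
  apply/forallP=> s; apply/forallP=> t.
  have [h1 h2] := H s t (ltn_ord s) (ltn_ord t).
  by rewrite h1 h2 !eqxx.
Qed.

Lemma oi_sym a b : order_iso a b -> order_iso b a.
Proof.
move/oiP=> [E H]; apply/oiP; split=> // s t hs ht.
by rewrite -E in hs ht; have [-> ->] := H s t hs ht.
Qed.

Lemma oi_trans a b c : order_iso a b -> order_iso b c -> order_iso a c.
Proof.
move/oiP=> [E H] /oiP [E2 H2]; apply/oiP; split; first by rewrite E.
move=> s t hs ht; have [-> ->] := H s t hs ht.
by rewrite E in hs ht; have [-> ->] := H2 s t hs ht.
Qed.

Lemma oi_map2 (f g : nat -> nat) s :
  {in s &, forall x y, (f x < f y) = (g x < g y)} ->
  {in s &, forall x y, (f x == f y) = (g x == g y)} ->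
  order_iso (map f s) (map g s).
Proof.
move=> H1 H2; apply/oiP; rewrite !size_map; split=> // a b ha hb.
rewrite !(nth_map 0) //.
by rewrite H1 ?H2 //; apply: mem_nth.
Qed.

Lemma L_core w I : sorted ltn I ->
  order_iso (map succn (sort (Rw w) I)) (gamma (map (nth 0 w) I)).
Proof.
move=> sI; rewrite sort_sub // gammaE -map_comp.
apply: oi_map2 => x y; rewrite /sig_ !mem_sort !mem_iota size_map !add0n => hx hy /=.
- by rewrite !ltnS nth_mono_lt.
- by rewrite !eqSS nth_mono_eq.
Qed.

Lemma gamma_oi a b : order_iso a b -> gamma a = gamma b.
Proof.
move/oiP=> [E H]; rewrite !gammaE /sig_ -E; congr (map _ _); apply: sort_eq_in.
- exact: (@Rw_total a).
- exact: (@Rw_total b).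
- exact: (@Rw_tr b).
- exact: (@Rw_anti b).
- move=> i j; rewrite !mem_iota !add0n => hi hj; rewrite /Rw.
  by have [-> ->] := H i j hi hj.
Qed.

Lemma mask_nthE w m : mask m w = map (nth 0 w) (mask m (iota 0 (size w))).
Proof.
have E : map (nth 0 w) (iota 0 (size w)) = w := mkseq_nth 0 w.
by rewrite map_mask E.
Qed.

Lemma L1a w m : size m = size w -> contains (gamma w) (gamma (mask m w)).
Proof.
move=> sm; set n := size w; set I := mask m (iota 0 n).
have sI : sorted ltn I by apply: (sorted_mask ltn_trans); exact: iota_ltn_sorted.
exists (map (fun i => i \in I) (sig_ w)); split.
  by rewrite size_map gammaE size_map.
rewrite [mask m w]mask_nthE -/n -/I [gamma w]gammaE -map_mask -filter_mask /sig_.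
rewrite (filter_sort (@Rw_total w) (@Rw_tr w)) -mask_filter ?iota_uniq //.
exact: L_core.
Qed.

Lemma size_gamma w : size (gamma w) = size w.
Proof. by rewrite gammaE size_map size_sort size_iota. Qed.

Lemma gamma_perm w : perm_eq (gamma w) (iota 1 (size w)).
Proof.
rewrite gammaE /sig_.
have -> : iota 1 (size w) = map succn (iota 0 (size w)).
  rewrite -[1]/(1 + 0) iotaDl; apply: eq_map => x; by rewrite add1n.
by apply: perm_map; rewrite perm_sort.
Qed.

Lemma count_lt_iota a k c : count (fun v => v < c) (iota a k) = minn (c - a) k.
Proof.
elim: k a => [|k IH] a /=; first by rewrite minn0.
rewrite IH; case: (ltnP a c) => h /=; lia.
Qed.

Lemma rigid_key r : perm_eq r (iota 1 (size r)) -> forall s, s < size r ->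
  nth 0 r s = (count (fun t => nth 0 r t < nth 0 r s) (iota 0 (size r))).+1.
Proof.
move=> pr s hs.
have E : map (nth 0 r) (iota 0 (size r)) = r := mkseq_nth 0 r.
have : nth 0 r s \in iota 1 (size r) by rewrite -(perm_mem pr) mem_nth.
rewrite mem_iota => /andP[h1 h2].
have -> : count (fun t => nth 0 r t < nth 0 r s) (iota 0 (size r)) =
          count (fun v => v < nth 0 r s) r by symmetry; rewrite -[X in count _ X]E count_map.
rewrite (permP pr) count_lt_iota; lia.
Qed.

Lemma rigid p q : perm_eq p (iota 1 (size p)) -> perm_eq q (iota 1 (size q)) ->
  order_iso p q -> p = q.
Proof.
move=> pp pq /oiP [E H].
apply: (eq_from_nth (x0:=0) E) => s hs.
rewrite (rigid_key pp hs) (rigid_key pq) -?E //; congr succn.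
apply: eq_in_count => t; rewrite mem_iota add0n => ht /=.
by have [-> _] := H t s ht hs.
Qed.

Lemma L1b w y : contains (gamma w) (gamma y) ->
  exists m, size m = size w /\ gamma (mask m w) = gamma y.
Proof.
case=> M [sM oi].
set n := size w; set σ := sig_ w; set J := mask M σ.
set m := map (fun i => i \in J) (iota 0 n).
set I := mask m (iota 0 n).
have sI : sorted ltn I by apply: (sorted_mask ltn_trans); exact: iota_ltn_sorted.
have IJ : sort (Rw w) I = J.
  apply: (sorted_eq (@Rw_tr w) (@Rw_anti w)).
  - exact: (sort_sorted (@Rw_total w)).
  - apply: (sorted_mask (@Rw_tr w)); exact: (sort_sorted (@Rw_total w)).
  - rewrite perm_sort; apply: uniq_perm.
    + by rewrite /I; apply: mask_uniq; apply: iota_uniq.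
    + by rewrite /J; apply: mask_uniq; rewrite /σ /sig_ sort_uniq iota_uniq.
    + move=> x; rewrite /I /m -filter_mask mem_filter.
      apply/andP/idP => [[]//|hx]; split=> //.
      by have := mem_mask hx; rewrite /σ /sig_ mem_sort.
exists m; split; first by rewrite size_map size_iota.
apply: rigid; try (rewrite size_gamma; exact: gamma_perm).
apply: oi_trans oi.
rewrite [gamma w]gammaE -map_mask -/σ -/J -IJ [mask m w]mask_nthE -/n -/I.
exact: oi_sym (L_core w sI).
Qed.

Lemma wmax_ge s x : x \in s -> x <= wmax s.
Proof.
elim: s => //= a s IH; rewrite inE => /orP[/eqP->|h]; first exact: leq_maxl.
exact: leq_trans (IH h) (leq_maxr _ _).
Qed.

Lemma wmax_le s c : all (fun v => v <= c) s -> wmax s <= c.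
Proof. by elim: s => //= a s IH /andP[h1 h2]; rewrite geq_max h1 IH. Qed.

Lemma cmp u : exists v, is_cay v /\ order_iso u v.
Proof.
set s := sort leq (undup u).
have us : uniq s by rewrite sort_uniq undup_uniq.
have ss : sorted ltn s.
  by rewrite ltn_sorted_uniq_leq us (sort_sorted leq_total).
have mem : forall a, (a \in s) = (a \in u) by move=> a; rewrite mem_sort mem_undup.
have key : {in s &, forall a b, (a < b) = (index a s < index b s) /\
                                (a == b) = (index a s == index b s)}.
  move=> a b ha hb.
  rewrite -(@nth_mono_lt s (index a s) (index b s) ss) ?index_mem //.
  rewrite -(@nth_mono_eq s (index a s) (index b s) ss) ?index_mem //.
  by rewrite !nth_index.
exists (map (fun a => (index a s).+1) u); split.
- rewrite /is_cay; apply/andP; split.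
  + by apply/allP => x /mapP [a _ ->].
  + apply/allP => k; rewrite mem_iota => /andP[k1 k2].
    have hw : wmax (map (fun a => (index a s).+1) u) <= size s.
      by apply: wmax_le; apply/allP => x /mapP [a ha ->]; rewrite index_mem mem.
    have hk : k.-1 < size s by lia.
    apply/mapP; exists (nth 0 s k.-1); first by rewrite -mem mem_nth.
    rewrite index_uniq //; lia.
- apply/oiP; rewrite size_map; split => // i j hi hj.
  rewrite !(nth_map 0) //.
  have hi' : nth 0 u i \in s by rewrite mem mem_nth.
  have hj' : nth 0 u j \in s by rewrite mem mem_nth.
  have [h1 h2] := key _ _ hi' hj'.
  by rewrite ltnS eqSS h1 h2.
Qed.

Lemma perm_of_is_perm p : is_perm p -> perm_eq p (iota 1 (size p)).
Proof.
case/andP => /andP[pos all1] up.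
have E : p =i iota 1 (wmax p).
  move=> x; apply/idP/idP.
  - move=> hx; rewrite mem_iota.
    have h1 := allP pos x hx; have h2 := wmax_ge hx; lia.
  - by move=> hx; exact: (allP all1 x hx).
have P : perm_eq p (iota 1 (wmax p)) by apply: uniq_perm => //; exact: iota_uniq.
by rewrite (perm_size P) size_iota.
Qed.

Lemma is_perm_of p : perm_eq p (iota 1 (size p)) -> is_perm p.
Proof.
move=> P; rewrite /is_perm /is_cay (perm_uniq P) iota_uniq andbT; apply/andP; split.
- apply/allP => x hx; move: hx; rewrite (perm_mem P) mem_iota => /andP[h _]; exact: h.
- apply/allP => k; rewrite mem_iota => /andP[k1 k2].
  rewrite (perm_mem P) mem_iota.
  have : wmax p <= size p.
    by apply: wmax_le; apply/allP => x; rewrite (perm_mem P) mem_iota => /andP[_ h]; lia.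
  lia.
Qed.

Lemma gamma_surj p : perm_eq p (iota 1 (size p)) -> exists x, gamma x = p.
Proof.
move=> P; set n := size p.
have up : uniq p by rewrite (perm_uniq P) iota_uniq.
have memp : forall x, (x \in p) = (0 < x < n.+1).
  by move=> x; rewrite (perm_mem P) mem_iota.
exists (map (fun i => index i p) (iota 1 n)).
rewrite gammaE /sig_ size_map size_iota.
have Ep : map (nth 0 p) (iota 0 n) = p := mkseq_nth 0 p.
have -> : sort (Rw (map (fun i => index i p) (iota 1 n))) (iota 0 n) = map predn p.
  apply: (sorted_eq (@Rw_tr _) (@Rw_anti _)).
  - exact: (sort_sorted (@Rw_total _)).
  - rewrite -Ep -map_comp sorted_map.
    apply: (@sub_in_sorted _ (fun i => i < n) ltn); last exact: iota_ltn_sorted.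
    + move=> i j hi hj hij /=; rewrite /Rw.
      have hpi : nth 0 p i \in p by rewrite mem_nth.
      have hpj : nth 0 p j \in p by rewrite mem_nth.
      rewrite memp in hpi; rewrite memp in hpj.
      rewrite !(nth_map 0) ?size_iota; try lia.
      rewrite !nth_iota; try lia.
      have -> : 1 + (nth 0 p i).-1 = nth 0 p i by lia.
      have -> : 1 + (nth 0 p j).-1 = nth 0 p j by lia.
      have hi2 : i < n := hi. have hj2 : j < n := hj.
      have hij2 : i < j := hij. by rewrite Ep !index_uniq // hij2.
    + by apply/allP => x; rewrite mem_iota add0n.
  - rewrite perm_sort.
    have -> : iota 0 n = map predn (iota 1 n).
      rewrite -[1]/(1 + 0) iotaDl -map_comp map_id_in // => x _ /=; by rewrite add1n.
    by apply: perm_map; rewrite perm_sym.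
rewrite -map_comp map_id_in // => x hx /=.
rewrite memp in hx; lia.
Qed.



Theorem theorem4p9 :
  (forall x y : seq nat, is_cay x -> is_cay y ->
     (class_ge x y <-> contains (gamma x) (gamma y))) /\
  (forall y : seq nat, is_cay y ->
     forall p : seq nat,
       (is_perm p /\ ~ contains p (gamma y)) <->
       (exists x : seq nat, is_cay x /\ ~ class_ge x y /\ gamma x = p)).
Proof.
have P1 : forall x y : seq nat, is_cay x ->
     (class_ge x y <-> contains (gamma x) (gamma y)).
  move=> x y cx; split.
  - case=> x' [y' [_ [_ [gx [gy [m [sm oi]]]]]]].
    rewrite -gx -gy -(gamma_oi oi); exact: L1a.
  - move/L1b => [m [sm gm]].
    have [v [cv oi]] := cmp (mask m x).
    exists x, v; split=> //; split=> //; split=> //; split.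
      by rewrite -(gamma_oi oi).
    by exists m.
split; first by move=> x y cx _; exact: P1.
move=> y cy p; split.
- case=> pp nc.
  have [x0 g0] := gamma_surj (perm_of_is_perm pp).
  have [v [cv oi]] := cmp x0.
  exists v; split=> //; split; last by rewrite -(gamma_oi oi).
  by rewrite (P1 _ _ cv) -(gamma_oi oi) g0.
- case=> x [cx [nc <-]]; split.
    apply: is_perm_of; rewrite size_gamma; exact: gamma_perm.
  by rewrite -(P1 _ _ cx).
Qed.
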